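(* Let $A_1,\dots,A_m$, $A$, $\gamma>0$, $M_\gamma$, $B_\gamma$ and $\sigma_\gamma$ be as follows: $A_j\in\mathbb{C}^{r_j\times n}$, $A=\begin{bmatrix}A_1\\ \vdots\\ A_m\end{bmatrix}$ has full row rank, $D_\gamma=\operatorname{diag}(\gamma I+A_1A_1^*,\dots,\gamma I+A_mA_m^* )$, $L$ is the strictly block lower triangular matrix with $(i,j)$ block $A_iA_j^*$ for $i>j$, $M_\gamma=(D_\gamma+L)^{-1}$, $B_\gamma=I-A^*M_\gamma A$, $R_\gamma=(D_{2\gamma})^{1/2}M_\gamma A$ (with $D_{2\gamma}$ being $D_\gamma$ with $\gamma$ replaced by $2\gamma$), and $\sigma_\gamma$ the smallest nonzero singular value of $R_\gamma$. For data vectors $p=(p_1,\dots,p_m)$ and $\tilde p=(\tilde p_1,\dots,\tilde p_m)$ (with $p_j,\tilde p_j\in\mathbb{C}^{r_j}$), let $q_\gamma^k$ and $\tilde q_\gamma^k$ denote the iterates of the regularized block Kaczmarz method with $q_\gamma^0=\tilde q_\gamma^0=0$: $$q_0=q_\gamma^k,\quad q_j=q_{j-1}+A_j^*(\gamma I+A_jA_j^* )^{-1}(p_j-A_jq_{j-1}),\ j=1,\dots,m,\quad q_\gamma^{k+1}=q_m,$$ (equivalently $q_\gamma^{k+1}=B_\gamma q_\gamma^k+A^*M_\gamma p$), and similarly for $\tilde q_\gamma^k$ with $\tilde p$ in place of $p$. Then for every $k\ge 1$, the error $e^k=\tilde q_\gamma^k-q_\gamma^k$ satisfies $$\|e^k\|\le\left[\frac{1-(1-\sigma_\gamma^2)^{k/2}}{1-(1-\sigma_\gamma^2)^{1/2}}\right]\big\|A^*M_\gamma(\tilde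 p-p)\big\|.$$
   Context: $A^*$ is the conjugate transpose; $\|\cdot\|$ is the Euclidean norm on vectors and the operator 2-norm on matrices; $(D_{2\gamma})^{1/2}$ is the Hermitian positive definite square root. One has $0<\sigma_\gamma\le 1$. *)

(* Defs.v *)
From HB Require Import structures.
From mathcomp Require Import all_boot all_order all_algebra.
From mathcomp Require Import complex.
Set Implicit Arguments. Unset Strict Implicit. Unset Printing Implicit Defensive.
Import Order.TTheory GRing.Theory Num.Theory.
Local Open Scope ring_scope.

(* Complex matrices are matrices over R[i] for a real closed field R
   (R = the reals gives the usual complex numbers). *)

Definition adjmx {R : rcfType} {p q : nat} (A : 'M[R[i]]_(p, q)) : 'M[R[i]]_(q, p) :=
  (map_mx (@conjc R) A)^T.

Definition vnorm {R : rcfType} {n : nat} (v : 'cV[R[i]]_n) : R :=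
  Num.sqrt (\sum_(i < n) (ComplexField.Normc.normc (v i 0)) ^+ 2).

Section Kaczmarz.
Variables (R : rcfType) (m n : nat) (r : 'I_m -> nat).
Variable (A : forall j : 'I_m, 'M[R[i]]_(r j, n)).

Definition Astack : 'M[R[i]]_(\sum_j r j, n) := \mxcol_j A j.

Definition Dmat (g : R) : 'M[R[i]]_(\sum_j r j) :=
  mxdiag (fun j => ((g%:C)%C)%:M + A j *m adjmx (A j)).

Definition Lmat : 'M[R[i]]_(\sum_j r j) :=
  \mxblock_(i, j) (if (j < i)%N then A i *m adjmx (A j) else 0).

Definition Mmat (g : R) : 'M[R[i]]_(\sum_j r j) := invmx (Dmat g + Lmat).

Definition kacz_step (g : R) (p : forall j : 'I_m, 'cV[R[i]]_(r j)) (q : 'cV[R[i]]_n)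
  : 'cV[R[i]]_n :=
  foldl (fun q' (j : 'I_m) =>
           q' + adjmx (A j) *m invmx (((g%:C)%C)%:M + A j *m adjmx (A j))
                  *m (p j - A j *m q'))
        q (enum 'I_m).

Definition kacz_iter (g : R) (p : forall j : 'I_m, 'cV[R[i]]_(r j)) (k : nat)
  : 'cV[R[i]]_n := iter k (kacz_step g p) 0.

End Kaczmarz.

Definition herm_pd {R : rcfType} {N : nat} (S : 'M[R[i]]_N) : Prop :=
  adjmx S = S /\
  forall v : 'cV[R[i]]_N, v != 0 -> ((adjmx v *m S *m v) 0 0) \is Num.pos.

Definition singular_value {R : rcfType} {p q : nat} (M : 'M[R[i]]_(p, q)) (s : R) : Prop :=
  0 <= s /\ eigenvalue (adjmx M *m M) ((s ^+ 2)%:C)%C.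

Definition min_nonzero_sv {R : rcfType} {p q : nat} (M : 'M[R[i]]_(p, q)) (s : R) : Prop :=
  [/\ 0 < s, singular_value M s & forall t, 0 < t -> singular_value M t -> s <= t].

(* Main.v *)
Require Import Defs.
From HB Require Import structures.
From mathcomp Require Import all_boot all_order all_algebra.
From mathcomp Require Import complex.
From mathcomp Require Import ring lra.
Import Order.TTheory GRing.Theory Num.Theory.
Local Open Scope ring_scope.


Section Basics.
Variable R : rcfType.
Local Notation C := (R[i]).

Lemma conjcE (x : C) : conjc x = Num.conj x.
Proof.
have [->|nz] := eqVneq x 0; first by rewrite conjC0 conjc0.
apply: (mulfI nz); by rewrite -sqr_normc normCK.
Qed.

Lemma adjmxE p q (M : 'M[C]_(p, q)) : adjmx M = (map_mx Num.conj M)^T.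
Proof. by rewrite /adjmx; congr (_^T); apply/matrixP => i j; rewrite !mxE conjcE. Qed.

Lemma adjmx_mul p q s (M : 'M[C]_(p, q)) (N : 'M[C]_(q, s)) :
  adjmx (M *m N) = adjmx N *m adjmx M.
Proof. by rewrite !adjmxE map_mxM trmx_mul. Qed.

Lemma adjmxD p q (M N : 'M[C]_(p, q)) : adjmx (M + N) = adjmx M + adjmx N.
Proof. by apply/matrixP => i j; rewrite !adjmxE !mxE rmorphD. Qed.

Lemma adjmxN p q (M : 'M[C]_(p, q)) : adjmx (- M) = - adjmx M.
Proof. by apply/matrixP => i j; rewrite !adjmxE !mxE rmorphN. Qed.

Lemma adjmxB p q (M N : 'M[C]_(p, q)) : adjmx (M - N) = adjmx M - adjmx N.
Proof. by rewrite adjmxD adjmxN. Qed.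

Lemma adjmxK p q (M : 'M[C]_(p, q)) : adjmx (adjmx M) = M.
Proof. by apply/matrixP => i j; rewrite !adjmxE !mxE conjCK. Qed.

Lemma adjmx0 p q : adjmx (0 : 'M[C]_(p, q)) = 0.
Proof. by apply/matrixP => i j; rewrite !adjmxE !mxE conjC0. Qed.

Lemma adjmx_scalar p (a : C) : adjmx (a%:M : 'M[C]_p) = (Num.conj a)%:M.
Proof.
apply/matrixP => i j; rewrite !adjmxE !mxE eq_sym.
by case: eqP => _; rewrite ?mulr1n ?mulr0n ?conjC0.
Qed.

Definition cd {k} (u v : 'cV[C]_k) : C := (adjmx u *m v) 0 0.

Lemma cdDr k (u v w : 'cV[C]_k) : cd u (v + w) = cd u v + cd u w.
Proof. by rewrite /cd mulmxDr mxE. Qed.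
Lemma cdDl k (u v w : 'cV[C]_k) : cd (u + v) w = cd u w + cd v w.
Proof. by rewrite /cd adjmxD mulmxDl mxE. Qed.
Lemma cdNr k (u v : 'cV[C]_k) : cd u (- v) = - cd u v.
Proof. by rewrite /cd mulmxN mxE. Qed.
Lemma cdNl k (u v : 'cV[C]_k) : cd (- u) v = - cd u v.
Proof. by rewrite /cd adjmxN mulNmx mxE. Qed.
Lemma cdBr k (u v w : 'cV[C]_k) : cd u (v - w) = cd u v - cd u w.
Proof. by rewrite cdDr cdNr. Qed.
Lemma cdBl k (u v w : 'cV[C]_k) : cd (u - v) w = cd u w - cd v w.
Proof. by rewrite cdDl cdNl. Qed.
Lemma cd0r k (u : 'cV[C]_k) : cd u 0 = 0.
Proof. by rewrite /cd mulmx0 mxE. Qed.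
Lemma cd0l k (u : 'cV[C]_k) : cd 0 u = 0.
Proof. by rewrite /cd adjmx0 mul0mx mxE. Qed.
Lemma cd_mulr k l (X : 'M[C]_(k, l)) (u : 'cV[C]_k) (v : 'cV[C]_l) :
  cd u (X *m v) = cd (adjmx X *m u) v.
Proof. by rewrite /cd adjmx_mul adjmxK mulmxA. Qed.
Lemma cd_mull k l (X : 'M[C]_(k, l)) (u : 'cV[C]_l) (v : 'cV[C]_k) :
  cd (X *m u) v = cd u (adjmx X *m v).
Proof. by rewrite cd_mulr adjmxK. Qed.
Lemma cdC k (u v : 'cV[C]_k) : cd v u = Num.conj (cd u v).
Proof.
rewrite /cd !mxE rmorph_sum; apply: eq_bigr => j _.
by rewrite !adjmxE !mxE rmorphM /= conjCK mulrC.
Qed.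

Lemma cd_dotmx k (u v : 'cV[C]_k) : cd u v = dotmx v^T u^T.
Proof.
rewrite dotmxE /cd !mxE; apply: eq_bigr => j _.
by rewrite !adjmxE !mxE mulrC.
Qed.

Lemma cd_ge0 k (u : 'cV[C]_k) : 0 <= cd u u.
Proof. by rewrite cd_dotmx dnorm_ge0. Qed.

Lemma cd_eq0 k (u : 'cV[C]_k) : (cd u u == 0) = (u == 0).
Proof.
rewrite cd_dotmx dnorm_eq0; apply/eqP/eqP => [h|->]; last by rewrite trmx0.
by rewrite -[u]trmxK h trmx0.
Qed.

Lemma conjc_mul_normc (z : C) : conjc z * z = ((ComplexField.Normc.normc z) ^+ 2)%:C%C.
Proof.
case: z => a b /=; rewrite sqr_sqrtr ?addr_ge0 ?sqr_ge0 //.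
rewrite -[((_ +i* _)%C * (_ +i* _)%C)]/(_ +i* _)%C.
congr (Complex _ _); ring.
Qed.

End Basics.
Arguments cd {R k}.

Section Norms.
Variable R : rcfType.
Local Notation C := (R[i]).

Lemma vnorm_ge0 k (v : 'cV[C]_k) : 0 <= vnorm v.
Proof. exact: sqrtr_ge0. Qed.

Lemma cd_vnorm k (v : 'cV[C]_k) : cd v v = ((vnorm v) ^+ 2)%:C%C.
Proof.
rewrite /vnorm sqr_sqrtr ?sumr_ge0 // => [|j _]; last exact: sqr_ge0.
rewrite /cd mxE rmorph_sum /=; apply: eq_bigr => j _.
by rewrite /adjmx !mxE conjc_mul_normc.
Qed.

Lemma sqrtC_cd k (v : 'cV[C]_k) : sqrtC (cd v v) = (vnorm v)%:C%C.
Proof. by rewrite cd_vnorm rmorphXn /= sqrCK // ler0c vnorm_ge0. Qed.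

Lemma vnorm_triangle k (u v : 'cV[C]_k) : vnorm (u + v) <= vnorm u + vnorm v.
Proof.
have := (triangle_lerif (@dotmx C k) u^T v^T).1.
rewrite -linearD /= -!cd_dotmx !sqrtC_cd -rmorphD /=.
by rewrite lecR.
Qed.

Lemma vnorm_sqr_le k (u v : 'cV[C]_k) (a : R) : 0 <= a ->
  vnorm u ^+ 2 <= a ^+ 2 * vnorm v ^+ 2 -> vnorm u <= a * vnorm v.
Proof.
move=> a0 h; rewrite -(@ler_pXn2r _ 2) ?nnegrE ?mulr_ge0 ?vnorm_ge0 //.
by rewrite exprMn.
Qed.

End Norms.


Lemma unit_of_inj (F : fieldType) N (K : 'M[F]_N) :
  (forall v : 'cV_N, K *m v = 0 -> v = 0) -> K \in unitmx.
Proof.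
move=> h; rewrite -unitmx_tr -row_free_unit -kermx_eq0; apply/rowV0P => w /sub_kermxP hw.
have : K *m w^T = 0 by rewrite -[K]trmxK -trmx_mul hw trmx0.
by move/h => h'; rewrite -[w]trmxK h' trmx0.
Qed.

Section Blocks.
Variable R : rcfType.
Local Notation C := (R[i]).

Lemma cdZr k (a : C) (u v : 'cV[C]_k) : cd u (a *: v) = a * cd u v.
Proof. by rewrite /cd -scalemxAr mxE. Qed.

Lemma conj_realC (g : R) : Num.conj ((g%:C)%C : C) = (g%:C)%C.
Proof. by rewrite -conjcE conjc_real. Qed.

Lemma regI_unit k l (X : 'M[C]_(k, l)) (g : R) : 0 < g ->
  ((g%:C)%C%:M + X *m adjmx X) \in unitmx.
Proof.
move=> g0; apply: unit_of_inj => v hv.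
have : cd v (((g%:C)%C%:M + X *m adjmx X) *m v) = 0 by rewrite hv cd0r.
rewrite mulmxDl cdDr mul_scalar_mx cdZr -mulmxA cd_mulr.
move/eqP; rewrite paddr_eq0 ?mulr_ge0 ?cd_ge0 ?ler0c ?ltW //.
have gC0 : ((g%:C)%C : C) != 0 by rewrite gt_eqF // -[0]/((0:R)%:C%C) ltcR.
rewrite mulf_eq0 (negPf gC0) /=.
by rewrite cd_eq0 => /andP [/eqP].
Qed.

Lemma adjmx_mxblock p q (p_ : 'I_p -> nat) (q_ : 'I_q -> nat)
  (B_ : forall i j, 'M[C]_(p_ i, q_ j)) :
  adjmx (\mxblock_(i, j) B_ i j) = \mxblock_(i, j) adjmx (B_ j i).
Proof. by apply/matrixP => i j; rewrite !mxE. Qed.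

Lemma adjmx_mxcol p (p_ : 'I_p -> nat) l (B_ : forall i, 'M[C]_(p_ i, l)) :
  adjmx (\mxcol_i B_ i) = \mxrow_i adjmx (B_ i).
Proof. by apply/matrixP => i j; rewrite !mxE. Qed.

End Blocks.

Section Kacz.
Variables (R : rcfType) (m n : nat) (r : 'I_m -> nat).
Variable (A : forall j : 'I_m, 'M[R[i]]_(r j, n)).
Local Notation C := (R[i]).
Local Notation N := (\sum_j r j)%N.
Local Notation Aa := (Astack A).

Lemma KKadj g : Dmat A g + Lmat A + adjmx (Dmat A g + Lmat A) =
  Dmat A (2 * g) + Aa *m adjmx Aa.
Proof.
rewrite /Dmat /Lmat /Astack /mxdiag adjmx_mxcol mul_mxcol_mxrow.
rewrite adjmxD !adjmx_mxblock -!mxblockD; apply: eq_mxblock => i j.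
case: (eqVneq i j) => [<-|nij].
  rewrite ltnn !conform_mx_id adjmx0 !addr0 !adjmxD adjmx_mul adjmxK adjmx_scalar conj_realC.
  have -> : (2 * g) = g + g by rewrite mulr_natl mulr2n.
  by rewrite rmorphD raddfD addrACA addrA.
rewrite adjmx0 !add0r.
case: (ltngtP i j) => [ij|ji|/val_inj eij]; last by rewrite eij eqxx in nij.
  by rewrite ?adjmx0 ?addr0 ?add0r ?adjmx_mul ?adjmxK.
by rewrite ?adjmx0 ?addr0 ?add0r.
Qed.


Lemma kacz_step_eq g p q : 0 < g -> (Dmat A g + Lmat A) \in unitmx ->
  kacz_step A g p q = q + adjmx Aa *m (Mmat A g *m (\mxcol_j p j - Aa *m q)).
Proof.
move=> g0 Ku.
set W := fun j : 'I_m => invmx ((g%:C)%C%:M + A j *m adjmx (A j)).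
set F := (fun q' (j : 'I_m) => q' + adjmx (A j) *m W j *m (p j - A j *m q')).
pose qs k := foldl F q (take k (enum 'I_m)).
pose y j := W j *m (p j - A j *m qs (nat_of_ord j)).
have Hq : forall k, (k <= m)%N -> qs k = q + \sum_(j < m | (j < k)%N) adjmx (A j) *m y j.
  elim=> [|k IH] hk.
    by rewrite /qs take0 /= big_pred0 ?addr0 // => j; rewrite ltn0.
  pose o := Ordinal hk.
  rewrite /qs (take_nth o) ?size_enum_ord // foldl_rcons -/(qs k).
  have -> : nth o (enum 'I_m) k = o by exact: (nth_ord_enum o o).
  rewrite [in RHS](bigD1 o) //= /F.
  have -> : adjmx (A o) *m W o *m (p o - A o *m qs k) = adjmx (A o) *m y o.
    by rewrite -mulmxA.
  rewrite (IH (ltnW hk)) -addrA; congr (_ + _); rewrite addrC; congr (_ + _).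
  apply: eq_bigl => j; rewrite -(inj_eq val_inj) /= ltnS.
  by case: (ltngtP j k).
have HK : (Dmat A g + Lmat A) *m \mxcol_j y j = \mxcol_j p j - Aa *m q.
  rewrite mulmxDl /Dmat mul_mxdiag_mxcol /Lmat mul_mxblock_mxrow /Astack mxcol_mul.
  rewrite -mxcolB -mxcolD; apply: eq_mxcol => i.
  rewrite {1}/y mulKVmx ?regI_unit // (Hq i (ltnW (ltn_ord i))).
  rewrite mulmxDr mulmx_sumr (big_mkcond (fun j : 'I_m => (j < i)%N)) /=.
  have -> : \sum_(j < m) (if (j < i)%N then A i *m adjmx (A j) else 0) *m y j =
            \sum_(j < m) (if (j < i)%N then A i *m (adjmx (A j) *m y j) else 0).
    by apply: eq_bigr => j _; case: ifP; rewrite ?mul0mx // mulmxA.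
  by rewrite opprD addrA subrK.
have HY : \mxcol_j y j = Mmat A g *m (\mxcol_j p j - Aa *m q).
  by rewrite /Mmat -HK mulKmx.
rewrite -HY /kacz_step -[enum 'I_m](take_size) size_enum_ord -/(qs m) (Hq m) //.
rewrite /Astack adjmx_mxcol mul_mxrow_mxcol; congr (_ + _).
by apply: eq_bigl => j; rewrite ltn_ord.
Qed.

End Kacz.


Section Spec.
Variables (R : rcfType) (m n : nat) (r : 'I_m -> nat).
Variable (A : forall j : 'I_m, 'M[R[i]]_(r j, n)).
Local Notation C := (R[i]).
Local Notation N := (\sum_j r j)%N.
Local Notation Aa := (Astack A).

Lemma adjmxZ p q (a : C) (M : 'M[C]_(p, q)) : adjmx (a *: M) = Num.conj a *: adjmx M.
Proof. by apply/matrixP => i j; rewrite !adjmxE !mxE rmorphM. Qed.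

Lemma tC_adj p q (M : 'M[C]_(p, q)) : (M ^t*)%sesqui = adjmx M.
Proof. by apply/matrixP=> i j; rewrite !mxE conjcE. Qed.

Lemma S_unit (S : 'M[C]_N) : herm_pd S -> S \in unitmx.
Proof.
move=> [_ hS]; apply: unit_of_inj => v hv; apply/eqP; apply: contraT => /hS.
by rewrite -mulmxA hv mulmx0 mxE qualifE /= ltxx.
Qed.

Lemma K_unit g (S : 'M[C]_N) : 0 < g -> herm_pd S -> S *m S = Dmat A (2 * g) ->
  (Dmat A g + Lmat A) \in unitmx.
Proof.
move=> g0 hS SS; apply: unit_of_inj => v hv.
set K := Dmat A g + Lmat A in hv *.
have h1 : cd v (K *m v) = 0 by rewrite hv cd0r.
have h2 : cd v (adjmx K *m v) = 0 by rewrite cd_mulr adjmxK hv cd0l.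
have : cd v ((K + adjmx K) *m v) = 0 by rewrite mulmxDl cdDr h1 h2 addr0.
rewrite KKadj -SS mulmxDl cdDr -(mulmxA S) (cd_mulr _ _ _ S) hS.1.
rewrite -(mulmxA Aa) (cd_mulr _ _ _ Aa).
move/eqP; rewrite paddr_eq0 ?cd_ge0 // cd_eq0 => /andP [/eqP Sv _].
apply/eqP; apply: contraT => /hS.2; by rewrite -mulmxA Sv mulmx0 mxE qualifE /= ltxx.
Qed.

Lemma B_identity g (S : 'M[C]_N) (x : 'cV[C]_n) :
  (Dmat A g + Lmat A) \in unitmx -> herm_pd S -> S *m S = Dmat A (2 * g) ->
  let Bx := x - adjmx Aa *m (Mmat A g *m (Aa *m x)) in
  cd Bx Bx = cd x x - cd (S *m Mmat A g *m Aa *m x) (S *m Mmat A g *m Aa *m x).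
Proof.
move=> Ku hS SS Bx.
set K := Dmat A g + Lmat A in Ku SS.
set y := Mmat A g *m (Aa *m x).
have Ky : K *m y = Aa *m x by rewrite /y /Mmat mulKVmx.
have -> : S *m Mmat A g *m Aa *m x = S *m y by rewrite /y !mulmxA.
have e1 : cd x (adjmx Aa *m y) = cd y (adjmx K *m y).
  by rewrite cd_mulr adjmxK -Ky cd_mull.
have e2 : cd (adjmx Aa *m y) x = cd y (K *m y).
  by rewrite cd_mull adjmxK Ky.
have e3 : cd (adjmx Aa *m y) (adjmx Aa *m y) = cd y (Aa *m adjmx Aa *m y).
  by rewrite cd_mull adjmxK mulmxA.
have e4 : cd (S *m y) (S *m y) = cd y (K *m y) + cd y (adjmx K *m y) - cd y (Aa *m adjmx Aa *m y).
  rewrite cd_mull hS.1 mulmxA SS -cdDr -mulmxDl KKadj mulmxDl cdDr.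
  by rewrite addrK.
rewrite /Bx cdBl !cdBr e1 e2 e3 e4.
ring.
Qed.


Lemma sv_bound g (S : 'M[C]_N) (sigma : R) (w : 'cV[C]_N) :
  (Dmat A g + Lmat A) \in unitmx -> herm_pd S ->
  min_nonzero_sv (S *m Mmat A g *m Aa) sigma ->
  let x := adjmx Aa *m w in
  (sigma ^+ 2)%:C%C * cd x x <=
    cd (S *m Mmat A g *m Aa *m x) (S *m Mmat A g *m Aa *m x).
Proof.
move=> Ku hS [sig0 _ hmin]; set x := adjmx Aa *m w.
set Rm := S *m Mmat A g *m Aa.
set H := adjmx Rm *m Rm.
have Hadj : adjmx H = H by rewrite /H adjmx_mul adjmxK.
have Hn : H \is normalmx.
  apply/normalmxP.
  have E : (H ^t*)%sesqui = adjmx H by apply/matrixP=> i j; rewrite !mxE conjcE.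
  by rewrite E Hadj.
have /orthomx_spectralP HU := Hn.
set U := spectralmx H in HU; set d := spectral_diag H in HU.
have Uu : U *m adjmx U = 1%:M by rewrite -tC_adj; apply/unitarymxP/spectral_unitarymx.
have Uu' := mulmx1C Uu.
have Uunit : U \in unitmx := spectral_unit H.
have invU : invmx U = adjmx U by rewrite -tC_adj; apply: invmx_unitary; exact: spectral_unitarymx.
have UH : U *m H = diag_mx d *m U by rewrite {1}HU !mulmxA mulmxV // mul1mx.
set y := U *m x.
have cyy : cd y y = cd x x by rewrite /y cd_mull mulmxA Uu' mul1mx.
have Hx : H *m x = adjmx U *m (diag_mx d *m y) by rewrite {1}HU invU !mulmxA.
have cRx : cd (Rm *m x) (Rm *m x) = \sum_k d 0 k * (conjc (y k 0) * y k 0).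
  rewrite cd_mull mulmxA -/H Hx cd_mulr adjmxK -/y /cd mxE.
  apply: eq_bigr => k _; rewrite mul_diag_mx !mxE; ring.
have cyy2 : cd y y = \sum_k conjc (y k 0) * y k 0.
  by rewrite /cd mxE; apply: eq_bigr => k _; rewrite !mxE.
rewrite /= -cyy cyy2 cRx mulr_sumr; apply: ler_sum => k _.
have ge : 0 <= conjc (y k 0) * y k 0 by rewrite conjc_mul_normc ler0c sqr_ge0.
case: (eqVneq (y k 0) 0) => [->|yk0]; first by rewrite !mulr0.
apply: (ler_wpM2r ge).
set u := row k U.
have uH : u *m H = d 0 k *: u.
  by rewrite /u -row_mul UH row_mul row_diag_mx -scalemxAl -rowE.
set z := adjmx u.
have Hz : H *m z = Num.conj (d 0 k) *: z by rewrite /z -{1}Hadj -adjmx_mul uH adjmxZ.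
have yz : y k 0 = cd z x by rewrite /cd /z adjmxK /y -row_mul [RHS]mxE.
have z0 : z != 0.
  by apply: contra_neq yk0 => z0; rewrite yz z0 cd0l.
have u0 : u != 0.
  by apply: contra_neq z0 => u0; rewrite /z u0 adjmx0.
have czHz : cd z (H *m z) = cd (Rm *m z) (Rm *m z) by rewrite cd_mull mulmxA.
set lam := Num.conj (d 0 k) in Hz.
have czz : 0 < cd z z by rewrite lt_def cd_eq0 z0 cd_ge0.
have lam_ge0 : 0 <= lam.
  rewrite -(pmulr_lge0 _ czz) -cdZr -Hz czHz; exact: cd_ge0.
have lam_neq0 : lam != 0.
  apply/negP => /eqP l0.
  have : cd (Rm *m z) (Rm *m z) = 0 by rewrite -czHz Hz l0 scale0r cd0r.
  move/eqP; rewrite cd_eq0 /Rm -!mulmxA => /eqP RZ.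
  have MZ : Mmat A g *m (Aa *m z) = 0.
    have Su : S \in unitmx by apply: S_unit.
    by rewrite -(mulKmx Su (Mmat A g *m (Aa *m z))) RZ mulmx0.
  have AZ : Aa *m z = 0 by rewrite -(mulKVmx Ku (Aa *m z)) -/(Mmat A g) MZ mulmx0.
  by move: yk0; rewrite yz /x cd_mulr adjmxK AZ cd0l eqxx.
have dk : d 0 k = lam by rewrite /lam geC0_conj // -[d 0 k]conjCK -/lam geC0_conj.
have /complex_realP [a ha] := ger0_real lam_ge0.
have a0 : 0 < a by rewrite -ltcR -ha lt_def lam_neq0 lam_ge0.
have sv : singular_value Rm (Num.sqrt a).
  split; first exact: sqrtr_ge0.
  apply/eigenvalueP; exists u => //; rewrite sqr_sqrtr ?ltW // -ha -dk //.
have hs := hmin _ (etrans (sqrtr_gt0 a) a0) sv.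
rewrite dk ha lecR.
have := lerXn2r 2 (ltW sig0) (sqrtr_ge0 a) hs.
by rewrite sqr_sqrtr ?(ltW a0).
Qed.

End Spec.


Lemma zmod_rearr (V : zmodType) (a b c d e f : V) :
  (a + (b - c)) - (d + (e - f)) = (a - d) + ((b - e) - (c - f)).
Proof.
rewrite opprD addrACA; congr (_ + _).
by rewrite !opprB addrACA [in RHS]addrACA [X in _ + X = _]addrC.
Qed.

Lemma rec_alg (T : pzRingType) (a b : nat) (X : 'M[T]_(a, b)) (Mm : 'M[T]_b)
  (Aa : 'M[T]_(b, a)) (P P' : 'cV[T]_b) (qt q : 'cV[T]_a) :
  qt + X *m (Mm *m (P' - Aa *m qt)) - (q + X *m (Mm *m (P - Aa *m q))) =
  qt - q - X *m (Mm *m (Aa *m (qt - q))) + X *m Mm *m (P' - P).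
Proof.
rewrite -!mulmxA !mulmxBr zmod_rearr.
by rewrite [RHS]addrAC addrA.
Qed.

Lemma vnorm0 (R : rcfType) k : vnorm (0 : 'cV[R[i]]_k) = 0.
Proof.
have h : ((vnorm (0 : 'cV[R[i]]_k)) ^+ 2)%:C%C = ((0 : R)%:C)%C.
  by rewrite -cd_vnorm cd0l.
by move/complexI/eqP: h; rewrite sqrf_eq0 => /eqP.
Qed.

Theorem theorem3p2 (R : rcfType) (m n : nat) (r : 'I_m -> nat)
    (A : forall j : 'I_m, 'M[R[i]]_(r j, n)) (gamma : R)
    (p pt : forall j : 'I_m, 'cV[R[i]]_(r j))
    (S : 'M[R[i]]_(\sum_j r j)) (sigma : R) :
  0 < gamma ->
  row_free (Astack A) ->
  herm_pd S -> S *m S = Dmat A (2 * gamma) ->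
  min_nonzero_sv (S *m Mmat A gamma *m Astack A) sigma ->
  forall k : nat, (1 <= k)%N ->
  vnorm (kacz_iter A gamma pt k - kacz_iter A gamma p k)
    <= (1 - Num.sqrt (1 - sigma ^+ 2) ^+ k) / (1 - Num.sqrt (1 - sigma ^+ 2))
       * vnorm (adjmx (Astack A) *m Mmat A gamma *m \mxcol_j (pt j - p j)).
Proof.
move=> g0 _ hS SS hsv k _.
have Ku := @K_unit _ _ _ _ A gamma S g0 hS SS.
have sig0 : 0 < sigma by case: hsv.
set Aa := Astack A.
set M := Mmat A gamma.
set c := adjmx Aa *m M *m \mxcol_j (pt j - p j).
set rho := Num.sqrt (1 - sigma ^+ 2).
pose e j := kacz_iter A gamma pt j - kacz_iter A gamma p j.
pose B (x : 'cV[R[i]]_n) := x - adjmx Aa *m (M *m (Aa *m x)).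
have erec : forall j, e j.+1 = B (e j) + c.
  move=> j; rewrite /e /kacz_iter !iterS !kacz_step_eq //.
  rewrite /B /c -/Aa -/M mxcolB; exact: rec_alg.
have erng : forall j, exists w, e j = adjmx Aa *m w.
  elim=> [|j [w ew]]; first by exists 0; rewrite /e /kacz_iter /= subrr mulmx0.
  exists (w - M *m (Aa *m e j) + M *m \mxcol_j (pt j - p j)).
  by rewrite erec /B /c ew !mulmxDr mulmxN -!mulmxA.
have rho0 : 0 <= rho by exact: sqrtr_ge0.
have rho2 : 1 - sigma ^+ 2 <= rho ^+ 2.
  rewrite /rho; case: (lerP 0 (1 - sigma ^+ 2)) => h; first by rewrite sqr_sqrtr.
  by rewrite ltr0_sqrtr // expr0n /= ltW.
have contr : forall j, vnorm (B (e j)) <= rho * vnorm (e j).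
  move=> j; have [w ew] := erng j.
  have hB := @B_identity _ _ _ _ A gamma S (e j) Ku hS SS.
  have hsvb := @sv_bound _ _ _ _ A gamma S sigma w Ku hS hsv.
  rewrite /= -ew in hsvb.
  apply: vnorm_sqr_le => //.
  have : cd (B (e j)) (B (e j)) <= ((1 - sigma ^+ 2) * vnorm (e j) ^+ 2)%:C%C.
    rewrite /B hB rmorphM rmorphB /= mulrBl mul1r -cd_vnorm lerD2l lerN2.
    exact: hsvb.
  rewrite cd_vnorm lecR => h; apply: (le_trans h).
  by apply: ler_wpM2r => //; exact: sqr_ge0.
have main : forall j, vnorm (e j) <= (\sum_(i < j) rho ^+ i) * vnorm c.
  elim=> [|j IH]; first by rewrite /e /kacz_iter /= subrr vnorm0 big_ord0 mul0r.
  rewrite erec big_ord_recl expr0 mulrDl mul1r.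
  apply: (le_trans (@vnorm_triangle _ _ _ _)); rewrite addrC lerD2l.
  apply: (le_trans (contr j)).
  have -> : \sum_(i < j) rho ^+ (lift ord0 i) = rho * \sum_(i < j) rho ^+ i.
    by rewrite mulr_sumr; apply: eq_bigr => i _; rewrite /= exprS.
  by rewrite -mulrA ler_wpM2l.
have rho1 : rho < 1.
  rewrite /rho -{2}sqrtr1 ltr_sqrt ?ltr01 //.
  by rewrite gtrBl exprn_gt0.
have -> : (1 - rho ^+ k) / (1 - rho) = \sum_(i < k) rho ^+ i.
  have nz : 1 - rho != 0 by rewrite subr_eq0 eq_sym lt_eqF.
  apply: (mulIf nz); rewrite divfK // mulrC.
  by rewrite -opprB subrX1 -mulNr opprB.
exact: main.
Qed.
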